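(* Let $t$ be a normal term, $y$ a $\lambda$-variable with $y\notin Fv(t)$, $a$ a $\mu$-variable, $\sigma=[a:=^*y]$, and $A,B,C$ types. If $\Gamma,y:A\vdash t\sigma:B;\Delta,a:C$, then $\Gamma\vdash t:B;\Delta,a:A\to C$.
   Context: $\lambda\mu$-terms: $t::= x\mid \lambda x.t\mid (t\;t)\mid \mu a.t\mid (a\;t)$ over disjoint infinite sets of $\lambda$-variables and $\mu$-variables; $Fv(t)$ is the set of free variables; a term is normal if it has no redex of the forms $(\lambda x.u\;v)$ or $(\mu b.u\;v)$. $t[a:=^*y]$ is obtained from $t$ by replacing inductively each subterm $(a\;w)$ by $(a\;(w\;y))$. Types are built from propositional variables and $\perp$ with $\to$. Typing rules for $\Gamma\vdash t:A;\Delta$: (ax) $\Gamma\vdash x:A;\Delta$ if $x:A\in\Gamma$; ($\to_i$) from $\Gamma,x:A\vdash t:B;\Delta$ infer $\Gamma\vdash\lambda x.t:A\to B;\Delta$; ($\to_e$) from $\Gamma\vdash u:A\to B;\Delta$, $\Gamma\vdash v:A;\Delta$ infer $\Gamma\vdash(u\;v):B;\Delta$; ($\mu$) from $\Gamma\vdash t:\perp;\Delta,b:A$ infer $\Gamma\vdash\mu b.t:A;\Delta$; ($\perp$) from $\Gamma\vdash t:A;\Delta,b:A$ infer $\Gamma\vdash(b\;t):\perp;\Delta,b:A$. *)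

(* Defs.v *)
From Stdlib Require Import Arith.

(* lambda-variables and mu-variables are both represented by nat, but live in
   different syntactic positions, so the two sets are disjoint. *)
Inductive term : Type :=
| Var   (x : nat)
| Lam   (x : nat) (t : term)
| App   (t u : term)
| Mu    (a : nat) (t : term)
| Named (a : nat) (t : term).    (* (a t)      *)

Inductive ty : Type :=
| TVar (n : nat)
| Bot
| Arr (A B : ty).

Fixpoint lfree (x : nat) (t : term) : Prop :=
  match t with
  | Var z => x = z
  | Lam z u => x <> z /\ lfree x u
  | App u v => lfree x u \/ lfree x v
  | Mu _ u => lfree x u
  | Named _ u => lfree x u
  end.

Fixpoint lbound (x : nat) (t : term) : Prop :=
  match t with
  | Var _ => False
  | Lam z u => x = z \/ lbound x u
  | App u v => lbound x u \/ lbound x v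
  | Mu _ u => lbound x u
  | Named _ u => lbound x u
  end.

Fixpoint normal (t : term) : Prop :=
  match t with
  | Var _ => True
  | Lam _ u => normal u
  | App u v =>
      normal u /\ normal v /\
      match u with Lam _ _ => False | Mu _ _ => False | _ => True end
  | Mu _ u => normal u
  | Named _ u => normal u
  end.

Fixpoint subst_star (a y : nat) (t : term) : term :=
  match t with
  | Var z => Var z
  | Lam z u => Lam z (subst_star a y u)
  | App u v => App (subst_star a y u) (subst_star a y v)
  | Mu b u => if Nat.eqb b a then Mu b u else Mu b (subst_star a y u)
  | Named b w =>
      if Nat.eqb b a then Named b (App (subst_star a y w) (Var y))
      else Named b (subst_star a y w)
  end.

Definition ctx := nat -> option ty.
Definition extend (G : ctx) (x : nat) (A : ty) : ctx :=
  fun z => if Nat.eqb z x then Some A else G z.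

(* typing G t A D  stands for  G |- t : A ; D *)
Inductive typing : ctx -> term -> ty -> ctx -> Prop :=
| ty_ax : forall G D x A, G x = Some A -> typing G (Var x) A D
| ty_lam : forall G D x t A B,
    typing (extend G x A) t B D -> typing G (Lam x t) (Arr A B) D
| ty_app : forall G D u v A B,
    typing G u (Arr A B) D -> typing G v A D -> typing G (App u v) B D
| ty_mu : forall G D b t A,
    typing G t Bot (extend D b A) -> typing G (Mu b t) A D
| ty_bot : forall G D b t A,
    D b = Some A -> typing G t A D -> typing G (Named b t) Bot D.

(* Main.v *)
Require Import Defs.
From Stdlib Require Import Arith.

Lemma typing_ext : forall G t B D, typing G t B D ->
  forall G' D', (forall x, lfree x t -> G x = G' x) -> (forall b, D b = D' b) ->
  typing G' t B D'.
Proof.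
  induction 1; intros G' D' HG HD; simpl in *.
  - constructor. rewrite <- HG; auto.
  - constructor. apply IHtyping; auto.
    intros z Hz. unfold extend. destruct (Nat.eqb_spec z x); auto.
  - econstructor; [apply IHtyping1 | apply IHtyping2]; auto.
  - constructor. apply IHtyping; auto.
    intros z. unfold extend. destruct (Nat.eqb z b); auto.
  - econstructor; [rewrite <- HD; eauto | apply IHtyping; auto].
Qed.

Theorem mainTheorem19 :
  forall (t : term) (y a : nat) (A B C : ty) (G D : ctx),
    normal t ->
    ~ lfree y t ->
    ~ lbound y t ->
    typing (extend G y A) (subst_star a y t) B (extend D a C) ->
    typing G t B (extend D a (Arr A C)).
Proof.
  intros t y a A. induction t; intros B C G D Hn Hf Hb H; simpl in *.
  - inversion H; subst. constructor. unfold extend in H2.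
    destruct (Nat.eqb_spec x y); [subst; tauto | auto].
  - inversion H; subst. constructor.
    apply (IHt _ C); try tauto.
    apply typing_ext with (1 := ltac:(eassumption)); auto.
    intros z _. unfold extend.
    destruct (Nat.eqb_spec z x); destruct (Nat.eqb_spec z y); subst; auto; tauto.
  - inversion H; subst. econstructor.
    + apply (IHt1 _ C); try tauto; eassumption.
    + apply (IHt2 _ C); try tauto; eassumption.
  - destruct (Nat.eqb_spec a0 a).
    + subst. inversion H; subst. constructor.
      apply typing_ext with (1 := ltac:(eassumption)).
      * intros z Hz. unfold extend. destruct (Nat.eqb_spec z y); subst; tauto.
      * intros z. unfold extend. destruct (Nat.eqb z a); auto.
    + inversion H; subst. constructor.
      apply typing_ext with (G := G) (D := extend (extend D a0 B) a (Arr A C)); auto.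
      2: { intros z. unfold extend.
      destruct (Nat.eqb_spec z a0); destruct (Nat.eqb_spec z a); subst; auto; tauto. }
      apply (IHt _ C); try tauto.
      apply typing_ext with (1 := ltac:(eassumption)); auto.
      intros z. unfold extend.
      destruct (Nat.eqb_spec z a0); destruct (Nat.eqb_spec z a); subst; auto; tauto.
  - destruct (Nat.eqb_spec a0 a).
    + subst. inversion H; subst. inversion H6; subst.
      inversion H8; subst. unfold extend in H2, H3.
      rewrite Nat.eqb_refl in H2, H3. injection H2; injection H3; intros; subst.
      econstructor.
      * unfold extend. rewrite Nat.eqb_refl. reflexivity.
      * apply (IHt _ A0); tauto.
    + inversion H; subst. apply ty_bot with A0.
      * unfold extend in *. destruct (Nat.eqb_spec a0 a); [tauto|]. exact H3.
      * apply (IHt _ C); try tauto; eassumption.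
Qed.
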